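(* For every message $M$ and all formulas $\phi,\psi$: $\vdash[M](\phi\to\psi)\to([M]\phi\to[M]\psi)$; $\vdash[M]\phi\to\langle M\rangle\phi$; $\vdash[M]\phi\to[M][M]\phi$; $\vdash\neg[M]\phi\to[M]\neg[M]\phi$; $\vdash[M]\big([M](\phi\vee\psi)\to([M]\phi\vee[M]\psi)\big)$; $\vdash\phi\to[M]\phi$; and if $\vdash\phi$ then $\vdash[M]\phi$. (That is, $[M]$ is a disjunctive KD45-modality of explicit belief of the agent $\mathsf{CM}$, with $\mathsf{CM}$ truth-believing.)
   Context: Fix a finite set $\mathcal{A}$ of agent names containing a distinguished name $\mathsf{CM}$. Messages: $M ::= a \mid B \mid (M,M)$ with $a\in\mathcal{A}$, $B$ optional application-specific data constants, $(M,M')$ pairs. $\mathcal{P}$ is a denumerable set of propositional variables containing atoms $\mathsf{k}_a(M)$ for all $a\in\mathcal{A}$ and messages $M$. Formulas: $\phi ::= P \mid \phi\wedge\phi \mid \phi\vee\phi \mid \neg\phi \mid \phi\to\phi \mid [M]\phi$. Abbreviations: $\mathrm{true}:=\mathsf{k}_{\mathsf{CM}}(\mathsf{CM})$, $\mathrm{false}:=\neg\mathrm{true}$, $\phi\leftrightarrow\psi:=(\phi\to\psi)\wedge(\psi\to\phi)$, $\langle M\rangle\phi:=\neg\neg(\mathsf{k}_{\mathsf{CM}}(M)\wedge\phi)$. LIiP is the smallest set of formulas that contains all instances of: the axioms of an adequate Hilbert axiomatization of intuitionistic propositional logic; $\mathsf{k}_a(a)$; $(\mathsf{k}_a(M)\wedge\mathsf{k}_a(M'))\leftrightarrow\mathsf{k}_a((M,M'))$;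 $[M]\mathsf{k}_{\mathsf{CM}}(M)$; $[M](\phi\to\psi)\to([M]\phi\to[M]\psi)$; $[M]\phi\to(\mathsf{k}_{\mathsf{CM}}(M)\to\phi)$; $[M]\phi\to\langle M\rangle\phi$; $\phi\to[M]\phi$; and is closed under modus ponens and the rule: if $\mathsf{k}_{\mathsf{CM}}(M)\to\mathsf{k}_{\mathsf{CM}}(M')$ is in the set then so is $[M']\phi\to[M]\phi$ for every $\phi$. Write $\vdash\phi$ for $\phi\in\mathrm{LIiP}$. *)

(* Defs.v *)
Set Implicit Arguments.

Section LIiP.
(* agent names (finite set with distinguished CM) and data constants are
   the parameters of the theory; they become explicit binders of the theorem. *)
Variable Agent : Type.
Variable CM : Agent.
Variable Data : Type.

Inductive msg : Type :=
  | MAgent : Agent -> msg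
  | MData : Data -> msg
  | MPair : msg -> msg -> msg.

(* propositional variables: a denumerable set of plain variables together
   with the knowledge atoms k_a(M) *)
Inductive pvar : Type :=
  | PV : nat -> pvar
  | Katom : Agent -> msg -> pvar.

Inductive form : Type :=
  | FVar : pvar -> form
  | FAnd : form -> form -> form
  | FOr : form -> form -> form
  | FNot : form -> form
  | FImp : form -> form -> form
  | FBox : msg -> form -> form.

Definition fK (a : Agent) (M : msg) : form := FVar (Katom a M).
Definition ftrue : form := fK CM (MAgent CM).
Definition ffalse : form := FNot ftrue.
Definition fIff (p q : form) : form := FAnd (FImp p q) (FImp q p).
Definition fDia (M : msg) (p : form) : form := FNot (FNot (FAnd (fK CM M) p)).

(* Intuitionistic propositional logic: a standard adequate Hilbert system
   (Kleene's axiomatization) with primitive negation. *)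
Inductive LIiP : form -> Prop :=
  | ax_K p q : LIiP (FImp p (FImp q p))
  | ax_S p q r : LIiP (FImp (FImp p (FImp q r)) (FImp (FImp p q) (FImp p r)))
  | ax_andI p q : LIiP (FImp p (FImp q (FAnd p q)))
  | ax_andE1 p q : LIiP (FImp (FAnd p q) p)
  | ax_andE2 p q : LIiP (FImp (FAnd p q) q)
  | ax_orI1 p q : LIiP (FImp p (FOr p q))
  | ax_orI2 p q : LIiP (FImp q (FOr p q))
  | ax_orE p q r : LIiP (FImp (FImp p r) (FImp (FImp q r) (FImp (FOr p q) r)))
  | ax_notI p q : LIiP (FImp (FImp p q) (FImp (FImp p (FNot q)) (FNot p)))
  | ax_notE p q : LIiP (FImp (FNot p) (FImp p q))
  | ax_self a : LIiP (fK a (MAgent a))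
  | ax_pair a M M' : LIiP (fIff (FAnd (fK a M) (fK a M')) (fK a (MPair M M')))
  | ax_trust M : LIiP (FBox M (fK CM M))
  | ax_boxK M p q : LIiP (FImp (FBox M (FImp p q)) (FImp (FBox M p) (FBox M q)))
  | ax_boxT M p : LIiP (FImp (FBox M p) (FImp (fK CM M) p))
  | ax_boxD M p : LIiP (FImp (FBox M p) (fDia M p))
  | ax_truthbel M p : LIiP (FImp p (FBox M p))
  | r_mp p q : LIiP (FImp p q) -> LIiP p -> LIiP q
  | r_epi M M' p : LIiP (FImp (fK CM M) (fK CM M')) ->
                   LIiP (FImp (FBox M' p) (FBox M p)).

End LIiP.

Arguments FBox {Agent Data}.
Arguments FImp {Agent Data}.
Arguments FNot {Agent Data}.
Arguments FOr {Agent Data}.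

(* Main.v *)
Require Import Defs.
From Stdlib Require Import Fin List.
Import ListNotations.

Section Ded.
Variable Agent : Type.
Variable CM : Agent.
Variable Data : Type.
Notation form := (form Agent Data).
Notation L := (@LIiP Agent CM Data).

Inductive Der (G : list form) : form -> Prop :=
| d_ax p : L p -> Der G p
| d_hyp p : In p G -> Der G p
| d_mp p q : Der G (FImp p q) -> Der G p -> Der G q.

Lemma L_id p : L (FImp p p).
Proof.
  eapply r_mp. eapply r_mp. apply (ax_S CM p (FImp p p) p).
  apply ax_K. apply (ax_K CM p p).
Qed.

Lemma ded G A B : Der (A :: G) B -> Der G (FImp A B).
Proof.
  intro H; induction H.
  - apply d_mp with p. apply d_ax, ax_K. now apply d_ax.
  - destruct H as [->|H]. apply d_ax, L_id.
    apply d_mp with p. apply d_ax, ax_K. now apply d_hyp.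
  - eapply d_mp. eapply d_mp. apply d_ax, ax_S. exact IHDer1. exact IHDer2.
Qed.

Lemma der_nil p : Der [] p -> L p.
Proof. intro H; induction H. auto. destruct H. eapply r_mp; eauto. Qed.

Lemma nec M p : L p -> L (FBox M p).
Proof. intro H. eapply r_mp. apply ax_truthbel. exact H. Qed.

Lemma disj M phi psi :
  L (FBox M (FImp (FBox M (FOr phi psi)) (FOr (FBox M phi) (FBox M psi)))).
Proof.
  set (X := FImp (FBox M (FOr phi psi)) (FOr (FBox M phi) (FBox M psi))).
  assert (H : L (FImp (fK CM M) X)).
  { apply der_nil. apply ded. apply ded.
    set (G := [FBox M (FOr phi psi); fK CM M]).
    assert (Hor : Der G (FOr phi psi)).
    { eapply d_mp. eapply d_mp. apply d_ax, ax_boxT.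
      apply d_hyp; simpl; auto. apply d_hyp; simpl; auto. }
    eapply d_mp. eapply d_mp. eapply d_mp. apply d_ax, ax_orE.
    - apply ded. eapply d_mp. apply d_ax, ax_orI1.
      eapply d_mp. apply d_ax, ax_truthbel. apply d_hyp; simpl; auto.
    - apply ded. eapply d_mp. apply d_ax, ax_orI2.
      eapply d_mp. apply d_ax, ax_truthbel. apply d_hyp; simpl; auto.
    - exact Hor. }
  eapply r_mp. eapply r_mp. apply ax_boxK. apply nec. exact H. apply ax_trust.
Qed.
End Ded.

Theorem corollary5 (n : nat) (CM : Fin.t n) (Data : Type) :
  forall (M : msg (Fin.t n) Data) (phi psi : form (Fin.t n) Data),
    LIiP CM (FImp (FBox M (FImp phi psi)) (FImp (FBox M phi) (FBox M psi))) /\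
    LIiP CM (FImp (FBox M phi) (fDia CM M phi)) /\
    LIiP CM (FImp (FBox M phi) (FBox M (FBox M phi))) /\
    LIiP CM (FImp (FNot (FBox M phi)) (FBox M (FNot (FBox M phi)))) /\
    LIiP CM (FBox M (FImp (FBox M (FOr phi psi)) (FOr (FBox M phi) (FBox M psi)))) /\
    LIiP CM (FImp phi (FBox M phi)) /\
    (LIiP CM phi -> LIiP CM (FBox M phi)).
Proof.
  intros M phi psi.
  repeat split; try apply ax_boxK; try apply ax_boxD; try apply ax_truthbel.
  - apply disj.
  - apply nec.
Qed.
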